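(* Let $\mathcal A=(\mathbf a,\mathbf b)$ be a binary GCP of length $M$ and let $\mathcal B=(\mathbf c,\mathbf d)$ be a binary $(N,Z)$-CZCP. Let $(\mathbf e,\mathbf f)=\mathrm{Turyn}(\mathcal A,\mathcal B)$, i.e. $$\mathbf e=\mathbf c\otimes\frac{\mathbf a+\mathbf b}2-\overleftarrow{\mathbf d}\otimes\frac{\mathbf b-\mathbf a}2,\qquad \mathbf f=\mathbf d\otimes\frac{\mathbf a+\mathbf b}2+\overleftarrow{\mathbf c}\otimes\frac{\mathbf b-\mathbf a}2 .$$ Then $(\mathbf e,\mathbf f)$ is an $(NM,ZM)$-CZCP.
   Context: A binary GCP of length $M$ is a pair of $\pm1$ sequences with $\rho_{\mathbf a}(\tau)+\rho_{\mathbf b}(\tau)=0$ for all $\tau\ne0$. $\overleftarrow{\mathbf u}$ denotes the reversal of $\mathbf u$ and $\mathbf u\otimes\mathbf v=(u_0\mathbf v,u_1\mathbf v,\dots,u_{N-1}\mathbf v)$ the Kronecker product (so $\mathbf e,\mathbf f$ have length $NM$). Aperiodic correlation of real sequences of length $L$: $\rho_{\mathbf a,\mathbf b}(\tau)=\sum_{k=0}^{L-1-\tau}a_kb_{k+\tau}$ for $0\le\tau\le L-1$, $\rho_{\mathbf a,\mathbf b}(\tau)=\sum_{k=0}^{L-1+\tau}a_{k-\tau}b_k$ for $-(L-1)\le\tau\le-1$, $0$ otherwise; $\rho_{\mathbf a}=\rho_{\mathbf a,\mathbf a}$. CZCP: with $\mathcal T_1=\{1,\dots,Z\}$, $\mathcal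 T_2=\{L-Z,\dots,L-1\}$, a pair $(\mathbf a,\mathbf b)$ of length-$L$ sequences is an $(L,Z)$-CZCP if $\rho_{\mathbf a}(\tau)+\rho_{\mathbf b}(\tau)=0$ for all $|\tau|\in\mathcal T_1\cup\mathcal T_2$ and $\rho_{\mathbf a,\mathbf b}(\tau)+\rho_{\mathbf b,\mathbf a}(\tau)=0$ for all $|\tau|\in\mathcal T_2$. *)

(* Defs.v *)
From HB Require Import structures.
From mathcomp Require Import all_boot all_order all_algebra.
Set Implicit Arguments. Unset Strict Implicit. Unset Printing Implicit Defensive.
Import Order.TTheory GRing.Theory Num.Theory.
Local Open Scope ring_scope.

(* Aperiodic cross-correlation rho_{a,b}(tau), L = size a.
   tau = n >= 0 : sum_{k=0}^{L-1-n} a_k b_{k+n}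
   tau = -(n+1) : sum_{k=0}^{L-1-(n+1)} a_{k+n+1} b_k
   (empty sum, i.e. 0, when |tau| >= L). *)
Definition acorr (a b : seq rat) (tau : int) : rat :=
  match tau with
  | Posz n => \sum_(0 <= k < size a - n) a`_k * b`_(k + n)
  | Negz n => \sum_(0 <= k < size a - n.+1) a`_(k + n.+1) * b`_k
  end.

Definition aacorr (a : seq rat) (tau : int) : rat := acorr a a tau.

Definition binary (a : seq rat) : bool := all (fun x => (x == 1) || (x == -1)) a.

Definition binGCP (M : nat) (a b : seq rat) : Prop :=
  [/\ size a = M, size b = M, binary a, binary b &
      forall tau : int, tau != 0 -> aacorr a tau + aacorr b tau = 0].

Definition inT1 (Z n : nat) : bool := (1 <= n <= Z)%N.
Definition inT2 (L Z n : nat) : bool := (L - Z <= n)%N && (n < L)%N.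

Definition CZCP (L Z : nat) (a b : seq rat) : Prop :=
  [/\ size a = L, size b = L,
      (forall tau : int, inT1 Z `|tau|%N || inT2 L Z `|tau|%N ->
         aacorr a tau + aacorr b tau = 0) &
      (forall tau : int, inT2 L Z `|tau|%N ->
         acorr a b tau + acorr b a tau = 0)].

Definition binCZCP (L Z : nat) (a b : seq rat) : Prop :=
  [/\ CZCP L Z a b, binary a & binary b].

Definition kron (u v : seq rat) : seq rat :=
  flatten [seq [seq ui * vj | vj <- v] | ui <- u].

Definition seqadd (u v : seq rat) : seq rat := [seq x.1 + x.2 | x <- zip u v].
Definition seqsub (u v : seq rat) : seq rat := [seq x.1 - x.2 | x <- zip u v].
Definition seqhalf (u : seq rat) : seq rat := [seq x / 2 | x <- u].

Definition turyn_e (a b c d : seq rat) : seq rat :=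
  seqsub (kron c (seqhalf (seqadd a b))) (kron (rev d) (seqhalf (seqsub b a))).
Definition turyn_f (a b c d : seq rat) : seq rat :=
  seqadd (kron d (seqhalf (seqadd a b))) (kron (rev c) (seqhalf (seqsub b a))).

(* Main.v *)
Require Import Defs.
From HB Require Import structures.
From mathcomp Require Import all_boot all_order all_algebra.
From mathcomp Require Import zify ring lra.
Set Implicit Arguments. Unset Strict Implicit. Unset Printing Implicit Defensive.
Import Order.TTheory GRing.Theory Num.Theory.
Local Open Scope ring_scope.

Lemma acorr_nil u v t : size u = 0%N -> acorr u v t = 0.
Proof. by case: t => n Hu; rewrite /acorr Hu big_geq. Qed.

Lemma acorr_large u v (s : nat) : (size u <= s)%N -> acorr u v s = 0.
Proof. move=> H; rewrite /acorr big_geq //; lia. Qed.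

Lemma acorrE u v (s : nat) N : size u = N -> size v = N ->
  acorr u v s = \sum_(0 <= t < N) u`_t * v`_(t + s).
Proof.
move=> Hu Hv; rewrite /acorr Hu (@big_cat_nat _ _ _ (N - s) 0 N) ?leq_subr //=.
rewrite [X in _ = _ + X]big_nat_cond [X in _ = _ + X]big1 ?addr0 // => i /andP[/andP[Hi _] _].
by rewrite [v`_ _]nth_default ?mulr0 // Hv; lia.
Qed.

Lemma acorrN u v n : size u = size v -> acorr u v (Negz n) = acorr v u (Posz n.+1).
Proof.
move=> H; rewrite /acorr H; apply: eq_big_nat => i _; by rewrite mulrC.
Qed.

Lemma sum_mulM (h : nat -> rat) N M :
  \sum_(0 <= t < N * M) h t = \sum_(0 <= i < N) \sum_(0 <= j < M) h (i * M + j)%N.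
Proof.
elim: N => [|N IH]; first by rewrite mul0n !big_geq.
rewrite big_nat_recr //= -IH mulSn addnC (@big_cat_nat _ _ _ (N * M) 0 (N * M + M)) ?leq_addr //=.
congr (_ + _).
rewrite -{1}(add0n (N * M)%N) big_addn.
have -> : (N * M + M - N * M = M)%N by lia.
apply: eq_big_nat => j _; by rewrite addnC.
Qed.

Lemma size_kron u v : size (kron u v) = (size u * size v)%N.
Proof. by elim: u => //= x u IH; rewrite /kron /= size_cat size_map -/(kron u v) IH mulSn. Qed.

Lemma nth_kron u v t : (0 < size v)%N ->
  (kron u v)`_t = u`_(t %/ size v) * v`_(t %% size v).
Proof.
move=> Hv; elim: u t => [|x u IH] t; first by rewrite /kron /= !nth_nil mul0r.
rewrite /kron /= nth_cat size_map -/(kron u v).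
case: ltnP => Ht.
  by rewrite (nth_map 0) // divn_small // modn_small.
have [t' ->] : exists t', t = (1 * size v + t')%N by exists (t - size v)%N; lia.
rewrite divnMDl // modnMDl mul1n addKn IH add1n /=.
done.
Qed.

Lemma nth_seqadd u v t : size u = size v -> (seqadd u v)`_t = u`_t + v`_t.
Proof.
move=> H; rewrite /seqadd; case: (ltnP t (size u)) => Ht.
  by rewrite (nth_map (0,0)) ?size_zip ?H ?minnn -?H // nth_zip.
by rewrite !nth_default ?addr0 ?size_map ?size_zip -?H ?minnn.
Qed.

Lemma nth_seqsub u v t : size u = size v -> (seqsub u v)`_t = u`_t - v`_t.
Proof.
move=> H; rewrite /seqsub; case: (ltnP t (size u)) => Ht.
  by rewrite (nth_map (0,0)) ?size_zip ?H ?minnn -?H // nth_zip.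
by rewrite !nth_default ?subr0 ?size_map ?size_zip -?H ?minnn.
Qed.

Lemma nth_seqhalf u t : (seqhalf u)`_t = u`_t / 2.
Proof.
rewrite /seqhalf; case: (ltnP t (size u)) => Ht; first by rewrite (nth_map 0).
by rewrite !nth_default ?mul0r ?size_map.
Qed.

Lemma acorr_revrev u v N (s : nat) : size u = N -> size v = N ->
  acorr (rev u) (rev v) s = acorr v u s.
Proof.
move=> Hu Hv; rewrite /acorr size_rev Hu Hv big_nat_rev /=.
apply: eq_big_nat => i /andP[_ Hi].
rewrite !nth_rev ?Hu ?Hv; try lia.
rewrite mulrC; congr (_ * _); congr nth; lia.
Qed.

Lemma acorr_rev2 u v N (s : nat) : size u = N -> size v = N ->
  acorr u (rev v) s = acorr v (rev u) s.
Proof.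
move=> Hu Hv; rewrite /acorr Hu Hv big_nat_rev /=.
apply: eq_big_nat => i /andP[_ Hi].
rewrite !nth_rev ?Hu ?Hv; try lia.
rewrite mulrC; congr (_ * _); congr nth; lia.
Qed.

Lemma expand4 (u1 u2 v1 v2 : seq rat) N (s : nat) (al be ga de : rat) :
  size u1 = N -> size u2 = N -> size v1 = N -> size v2 = N ->
  \sum_(0 <= i < N) (u1`_i * al + u2`_i * be) * (v1`_(i + s) * ga + v2`_(i + s) * de)
  = al * ga * acorr u1 v1 s + al * de * acorr u1 v2 s
    + be * ga * acorr u2 v1 s + be * de * acorr u2 v2 s.
Proof.
move=> H1 H2 H3 H4.
rewrite (@acorrE u1 v1 s N H1 H3) (@acorrE u1 v2 s N H1 H4) (@acorrE u2 v1 s N H2 H3) (@acorrE u2 v2 s N H2 H4).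
rewrite !mulr_sumr -!big_split /=; apply: eq_bigr => i _; ring.
Qed.

Lemma vanish (g : nat -> rat) N Z : g N.-1 != 0 ->
  (forall k, (N - Z <= k < N)%N -> \sum_(0 <= i < N - k) g i * g (i + k)%N = 0) ->
  forall m, (m < Z)%N -> (m < N)%N -> g m = 0.
Proof.
move=> HN Hk m; elim/ltn_ind: m => m IH Hm HmN.
have := Hk (N.-1 - m)%N; rewrite (_ : (N - (N.-1 - m)) = m.+1)%N; last lia.
rewrite big_nat_recr //= big1_seq ?add0r; last first.
  move=> i /andP[_]; rewrite mem_index_iota => /andP[_ Hi].
  by rewrite IH ?mul0r //; lia.
rewrite (_ : (m + (N.-1 - m)) = N.-1)%N; last lia.
move=> /(_ _)/eqP; rewrite mulf_eq0 (negbTE HN) orbF => /(_ _)/eqP; apply; lia.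
Qed.

Lemma binary_nth c i : binary c -> (i < size c)%N -> (c`_i = 1) \/ (c`_i = -1).
Proof.
move=> /allP Hc Hi; have := Hc _ (mem_nth 0 Hi) => /orP[/eqP->|/eqP->]; by [left|right].
Qed.

Lemma Dlem N Z c d : size c = N -> size d = N -> binary c -> binary d ->
  (forall k : nat, (N - Z <= k < N)%N -> acorr c c k + acorr d d k = 0) ->
  (forall k : nat, (N - Z <= k < N)%N -> acorr c d k + acorr d c k = 0) ->
  forall s : nat, (N - Z <= s)%N -> acorr c (rev c) s = acorr d (rev d) s.
Proof.
move=> Hc Hd bc bd H1 H2 s Hs.
case: (posnP N) => [N0|Npos]; first by rewrite !acorr_nil ?Hc ?Hd.
pose p i := c`_i + d`_i; pose q i := c`_i - d`_i.
have Hp : forall k, (N - Z <= k < N)%N -> \sum_(0 <= i < N - k) p i * p (i + k)%N = 0.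
  move=> k Hk; transitivity ((acorr c c k + acorr d d k) + (acorr c d k + acorr d c k));
    last by rewrite H1 // H2 // addr0.
  rewrite /acorr Hc Hd -!big_split /=; apply: eq_bigr => i _; rewrite /p; ring.
have Hq : forall k, (N - Z <= k < N)%N -> \sum_(0 <= i < N - k) q i * q (i + k)%N = 0.
  move=> k Hk; transitivity ((acorr c c k + acorr d d k) - (acorr c d k + acorr d c k));
    last by rewrite H1 // H2 // subr0.
  rewrite /acorr Hc Hd -!big_split -sumrB /=; apply: eq_bigr => i _; rewrite /q; ring.
have HPQ : (forall m, (m < Z)%N -> (m < N)%N -> p m = 0) \/
           (forall m, (m < Z)%N -> (m < N)%N -> q m = 0).
  have HNc : (N.-1 < size c)%N by rewrite Hc; lia.
  have HNd : (N.-1 < size d)%N by rewrite Hd; lia.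
  case: (binary_nth bc HNc) => Ec; case: (binary_nth bd HNd) => Ed.
  - left; apply: (vanish _ Hp); rewrite /p Ec Ed //.
  - right; apply: (vanish _ Hq); rewrite /q Ec Ed //.
  - right; apply: (vanish _ Hq); rewrite /q Ec Ed //.
  - left; apply: (vanish _ Hp); rewrite /p Ec Ed //.
rewrite /acorr Hc Hd; apply: eq_big_nat => i /andP[_ Hi].
have Hr : (i + s < N)%N by move: Hi; clear; lia.
rewrite !nth_rev ?Hc ?Hd //.
set j := (N - (i + s).+1)%N.
have Hi1 : (i < Z)%N by move: Hi Hs; clear; lia.
have Hi2 : (i < N)%N by move: Hi; clear; lia.
have Hj1 : (j < Z)%N by rewrite /j; move: Hi Hs; clear; lia.
have Hj2 : (j < N)%N by rewrite /j; move: Hi; clear; lia.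
case: HPQ => H.
- have := H i Hi1 Hi2; have := H j Hj1 Hj2; rewrite /p.
  move/eqP; rewrite addr_eq0 => /eqP Ej; move/eqP; rewrite addr_eq0 => /eqP Ei.
  by rewrite Ej Ei mulrNN.
- have := H i Hi1 Hi2; have := H j Hj1 Hj2; rewrite /q.
  move/eqP; rewrite subr_eq0 => /eqP Ej; move/eqP; rewrite subr_eq0 => /eqP Ei.
  by rewrite Ej Ei.
Qed.

Lemma idx1 i j M : (0 < M)%N -> (j < M)%N -> ((i * M + j) %/ M = i)%N /\ ((i * M + j) %% M = j)%N.
Proof. by move=> HM Hj; rewrite divnMDl // divn_small // addn0 modnMDl modn_small. Qed.

Lemma idx2 i j n M : (0 < M)%N ->
  ((i * M + j + n) %/ M = i + (j + n) %/ M)%N /\ ((i * M + j + n) %% M = (j + n) %% M)%N.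
Proof. by move=> HM; rewrite -addnA divnMDl // modnMDl. Qed.

Lemma size_seqsub u v : size (seqsub u v) = minn (size u) (size v).
Proof. by rewrite /seqsub size_map size_zip. Qed.
Lemma size_seqadd u v : size (seqadd u v) = minn (size u) (size v).
Proof. by rewrite /seqadd size_map size_zip. Qed.
Lemma size_seqhalf u : size (seqhalf u) = size u.
Proof. by rewrite /seqhalf size_map. Qed.

Lemma split_corr (u w : seq rat) N M (n : nat) : size u = (N * M)%N -> size w = (N * M)%N ->
  acorr u w n = \sum_(0 <= j < M) \sum_(0 <= i < N) u`_(i * M + j) * w`_(i * M + j + n).
Proof.
move=> Hu Hw; rewrite (@acorrE u w n _ Hu Hw) sum_mulM exchange_big_nat //.
Qed.

Local Close Scope ring_scope.
Theorem theorem6 (M N Z : nat) (a b c d : seq rat) :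
  binGCP M a b -> binCZCP N Z c d ->
  CZCP (N * M) (Z * M) (turyn_e a b c d) (turyn_f a b c d).
Proof.
Local Open Scope ring_scope.
move=> [Ha Hb _ _ Hab] [[Hc Hd Hcd1 Hcd2] bc bd].
set x := seqhalf (seqadd a b); set y := seqhalf (seqsub b a).
have Hx : size x = M by rewrite size_seqhalf size_seqadd Ha Hb minnn.
have Hy : size y = M by rewrite size_seqhalf size_seqsub Ha Hb minnn.
set e := turyn_e a b c d; set f := turyn_f a b c d.
have He : size e = (N * M)%N.
  by rewrite /e /turyn_e size_seqsub !size_kron size_rev Hc Hd Hx Hy minnn.
have Hf : size f = (N * M)%N.
  by rewrite /f /turyn_f size_seqadd !size_kron size_rev Hc Hd Hx Hy minnn.
case: (posnP (N * M)) => [NM0|NMpos].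
  by split => // tau _; rewrite ?acorr_nil /aacorr ?acorr_nil ?He ?Hf ?NM0 ?addr0.
have Mpos : (0 < M)%N by move: NMpos; rewrite muln_gt0 => /andP[].
have Npos : (0 < N)%N by move: NMpos; rewrite muln_gt0 => /andP[].
have Ee : forall t, e`_t = c`_(t %/ M) * x`_(t %% M) + (rev d)`_(t %/ M) * - y`_(t %% M).
  move=> t; rewrite /e /turyn_e -/x -/y nth_seqsub ?size_kron ?size_rev ?Hc ?Hd ?Hx ?Hy //.
  by rewrite !nth_kron ?Hx ?Hy // mulrN.
have Ef : forall t, f`_t = d`_(t %/ M) * x`_(t %% M) + (rev c)`_(t %/ M) * y`_(t %% M).
  move=> t; rewrite /f /turyn_f -/x -/y nth_seqadd ?size_kron ?size_rev ?Hc ?Hd ?Hx ?Hy //.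
  by rewrite !nth_kron ?Hx ?Hy.
have Exa : forall j, x`_j = (a`_j + b`_j) / 2.
  by move=> j; rewrite /x nth_seqhalf nth_seqadd ?Ha ?Hb.
have Eya : forall j, y`_j = (b`_j - a`_j) / 2.
  by move=> j; rewrite /y nth_seqhalf nth_seqsub ?Ha ?Hb.
have Rc : forall s : nat, acorr (rev c) (rev c) s = acorr c c s.
  by move=> s; rewrite (@acorr_revrev c c N s Hc Hc).
have Rd : forall s : nat, acorr (rev d) (rev d) s = acorr d d s.
  by move=> s; rewrite (@acorr_revrev d d N s Hd Hd).
have Rcd : forall s : nat, acorr c (rev d) s = acorr d (rev c) s.
  by move=> s; rewrite (@acorr_rev2 c d N s Hc Hd).
have Rdc : forall s : nat, acorr (rev d) c s = acorr (rev c) d s.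
  by move=> s; rewrite -{1}(revK c) (@acorr_revrev d (rev c) N) ?size_rev.
have Rcd2 : forall s : nat, acorr (rev c) (rev d) s = acorr d c s.
  by move=> s; rewrite (@acorr_revrev c d N s Hc Hd).
have Rdc2 : forall s : nat, acorr (rev d) (rev c) s = acorr c d s.
  by move=> s; rewrite (@acorr_revrev d c N s Hd Hc).
have Hrc : size (rev c) = N by rewrite size_rev.
have Hrd : size (rev d) = N by rewrite size_rev.
have Kauto : forall n j, (j < M)%N ->
  \sum_(0 <= i < N) (e`_(i * M + j) * e`_(i * M + j + n) + f`_(i * M + j) * f`_(i * M + j + n))
  = (x`_j * x`_((j + n) %% M) + y`_j * y`_((j + n) %% M)) *
    (acorr c c ((j + n) %/ M)%N + acorr d d ((j + n) %/ M)%N).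
  move=> n j Hj; set s := ((j + n) %/ M)%N; set j' := ((j + n) %% M)%N.
  rewrite big_split.
  transitivity (\sum_(0 <= i < N) (c`_i * x`_j + (rev d)`_i * - y`_j) *
                                 (c`_(i + s) * x`_j' + (rev d)`_(i + s) * - y`_j')
              + \sum_(0 <= i < N) (d`_i * x`_j + (rev c)`_i * y`_j) *
                                 (d`_(i + s) * x`_j' + (rev c)`_(i + s) * y`_j')).
    congr (_ + _); apply: eq_bigr => i _; rewrite ?Ee ?Ef;
      have [-> ->] := idx1 i Mpos Hj; by have [-> ->] := idx2 i j n Mpos.
  rewrite (@expand4 c (rev d) c (rev d) N s _ _ _ _ Hc Hrd Hc Hrd) (@expand4 d (rev c) d (rev c) N s _ _ _ _ Hd Hrc Hd Hrc).
  rewrite Rc Rd Rcd Rdc; ring.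
have H1 : forall k : nat, (N - Z <= k < N)%N -> acorr c c k + acorr d d k = 0.
  by move=> k Hk; have := Hcd1 (Posz k); rewrite /aacorr; apply; rewrite /inT2 /= Hk orbT.
have H2 : forall k : nat, (N - Z <= k < N)%N -> acorr c d k + acorr d c k = 0.
  by move=> k Hk; have := Hcd2 (Posz k); apply; rewrite /inT2 /= Hk.
have D1 := Dlem Hc Hd bc bd H1 H2.
have D2 : forall s : nat, (N - Z <= s)%N -> acorr (rev c) c s = acorr (rev d) d s.
  move=> s Hs; have := @Dlem N Z (rev c) (rev d) Hrc Hrd.
  rewrite /binary !all_rev !revK; apply => //.
  - by move=> k Hk; rewrite Rc Rd H1.
  - by move=> k Hk; rewrite Rcd2 Rdc2 addrC H2.
have F1 : forall s : nat, (N - Z <= s)%N -> acorr c d s + acorr d c s = 0.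
  move=> s Hs; case: (ltnP s N) => HsN; first by apply: H2; rewrite Hs.
  by rewrite !acorr_large ?Hc ?Hd ?addr0.
have Kcross : forall n j, (j < M)%N -> (N - Z <= (j + n) %/ M)%N ->
  \sum_(0 <= i < N) (e`_(i * M + j) * f`_(i * M + j + n) + f`_(i * M + j) * e`_(i * M + j + n))
  = 0.
  move=> n j Hj; set s := ((j + n) %/ M)%N; set j' := ((j + n) %% M)%N => Hs.
  rewrite big_split.
  transitivity (\sum_(0 <= i < N) (c`_i * x`_j + (rev d)`_i * - y`_j) *
                                 (d`_(i + s) * x`_j' + (rev c)`_(i + s) * y`_j')
              + \sum_(0 <= i < N) (d`_i * x`_j + (rev c)`_i * y`_j) *
                                 (c`_(i + s) * x`_j' + (rev d)`_(i + s) * - y`_j')).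
    congr (_ + _); apply: eq_bigr => i _; rewrite ?Ee ?Ef;
      have [-> ->] := idx1 i Mpos Hj; by have [-> ->] := idx2 i j n Mpos.
  rewrite (@expand4 c (rev d) d (rev c) N s _ _ _ _ Hc Hrd Hd Hrc) (@expand4 d (rev c) c (rev d) N s _ _ _ _ Hd Hrc Hc Hrd).
  rewrite Rdc2 Rcd2 (D1 s Hs) (D2 s Hs).
  have := F1 s Hs; move/eqP; rewrite addr_eq0 => /eqP ->; ring.
have Wab : forall j j', x`_j * x`_j' + y`_j * y`_j' = (a`_j * a`_j' + b`_j * b`_j') / 2.
  by move=> j j'; rewrite !Exa !Eya; field.
have Aeq : forall k : nat, (inT1 Z k || inT2 N Z k) -> acorr c c k + acorr d d k = 0.
  by move=> k Hk; have := Hcd1 (Posz k); rewrite /aacorr; apply.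
have GCP0 : forall r : nat, (0 < r < M)%N ->
    \sum_(0 <= j < M - r) (a`_j * a`_(j + r) + b`_j * b`_(j + r)) = 0.
  move=> r Hr; have := Hab (Posz r); rewrite /aacorr /acorr Ha Hb big_split; apply.
  by case/andP: Hr; case: r.
have Auto : forall n : nat, (inT1 (Z * M) n || inT2 (N * M) (Z * M) n) ->
    acorr e e n + acorr f f n = 0.
  move=> n Hn.
  rewrite (split_corr n He He) (split_corr n Hf Hf) -big_split /=.
  rewrite (eq_big_nat _ _ (F2 := fun j => (x`_j * x`_((j + n) %% M) + y`_j * y`_((j + n) %% M)) *
    (acorr c c ((j + n) %/ M)%N + acorr d d ((j + n) %/ M)%N))); last first.
    by move=> j /andP[_ Hj]; rewrite -big_split Kauto.
  set k := (n %/ M)%N; set r := (n %% M)%N.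
  have En : n = (k * M + r)%N by apply: divn_eq.
  have HrM : (r < M)%N by apply: ltn_pmod.
  case: (posnP r) => [r0|rpos].
  - have Hk : inT1 Z k || inT2 N Z k.
      move: Hn; rewrite En r0 addn0 /inT1 /inT2 -mulnBl !leq_pmul2r // ltn_pmul2r //.
      by rewrite muln_gt0 Mpos andbT.
    apply: big1_seq => j; rewrite mem_index_iota => /andP[_ Hj].
    have [-> ->] : ((j + n) %/ M = k)%N /\ ((j + n) %% M = j)%N.
      by rewrite En r0 addn0 addnC; apply: idx1.
    by rewrite Aeq // mulr0.
  - rewrite (@big_cat_nat _ _ _ (M - r)) ?leq_subr //=.
    rewrite -{2}(add0n (M - r)%N) big_addn (_ : (M - (M - r)) = r)%N; last by move: HrM; clear; lia.
    rewrite (eq_big_nat _ _ (F2 := fun j => (a`_j * a`_(j + r) + b`_j * b`_(j + r)) / 2 * (acorr c c k + acorr d d k))); last first.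
      move=> j /andP[_ Hj].
      have [-> ->] : ((j + n) %/ M = k)%N /\ ((j + n) %% M = j + r)%N.
        by rewrite En addnCA; apply: idx1 => //; move: Hj HrM; clear; lia.
      by rewrite Wab.
    rewrite [X in _ + X](eq_big_nat _ _ (F2 := fun i => (a`_i * a`_(i + (M - r)) + b`_i * b`_(i + (M - r))) / 2 * (acorr c c k.+1 + acorr d d k.+1))); last first.
      move=> i /andP[_ Hi].
      have [-> ->] : ((i + (M - r) + n) %/ M = k.+1)%N /\ ((i + (M - r) + n) %% M = i)%N.
        rewrite (_ : (i + (M - r) + n) = k.+1 * M + i)%N; first by apply: idx1 => //; move: Hi HrM; clear; lia.
        rewrite En mulSn; move: Hi HrM; clear; lia.
      by rewrite Wab [a`_i * _]mulrC [b`_i * _]mulrC.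
    rewrite -(@mulr_suml _ _ _ _ (fun i => (a`_i * a`_(i + r) + b`_i * b`_(i + r)) / 2)).
    rewrite -(@mulr_suml _ _ _ _ (fun i => (a`_i * a`_(i + (M - r)) + b`_i * b`_(i + (M - r))) / 2)).
    rewrite -(@mulr_suml _ _ _ _ (fun i => (a`_i * a`_(i + r) + b`_i * b`_(i + r)))).
    rewrite -(@mulr_suml _ _ _ _ (fun i => (a`_i * a`_(i + (M - r)) + b`_i * b`_(i + (M - r))))).
    rewrite GCP0; last by rewrite rpos.
    have := GCP0 (M - r)%N; rewrite (_ : (M - (M - r)) = r)%N; last by move: HrM; clear; lia.
    move=> ->; first by rewrite !mul0r addr0.
    by move: rpos HrM; clear; lia.
have Cross : forall n : nat, inT2 (N * M) (Z * M) n -> acorr e f n + acorr f e n = 0.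
  move=> n Hn.
  rewrite (split_corr n He Hf) (split_corr n Hf He) -big_split /=.
  apply: big1_seq => j; rewrite mem_index_iota => /andP[_ Hj].
  rewrite -big_split; apply: Kcross => //.
  apply: leq_trans (leq_div2r _ (leq_addl j n)).
  rewrite leq_divRL // mulnBl; by case/andP: Hn.
split => //.
- case=> n Hn; first by apply: Auto.
  by rewrite /aacorr !acorrN ?He ?Hf //; apply: Auto.
- case=> n Hn; first by apply: Cross.
  by rewrite !acorrN ?He ?Hf // addrC; apply: Cross.
Qed.
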